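(* Let $X$ be a quantity space over a field $K$. (1) If $B=\{b_1,\ldots,b_n\}$ is a basis for $X$, then $B^*=\{[b_1],\ldots,[b_n]\}$ is a basis for the abelian group $X/{\sim}$, and $b_i\mapsto[b_i]$ is injective, so $B^*$ has the same cardinality as $B$. (2) Conversely, if $b_1,\ldots,b_n\in X$ are invertible and $B^*=\{[b_1],\ldots,[b_n]\}$ is a basis for $X/{\sim}$ with $[b_i]\neq[b_j]$ for $i\ne j$, then $B=\{b_1,\ldots,b_n\}$ is a basis for $X$ with the same cardinality as $B^*$.
   Context: A scalable monoid over a field $K$ is a monoid $X$ (written multiplicatively, unit $\mathbf{1}=1_X$) with a map $K\times X\to X$, $(\alpha,x)\mapsto\alpha x$, such that $1x=x$, $\alpha(\beta x)=(\alpha\beta)x$, and $\alpha(xy)=(\alpha x)y=x(\alpha y)$ for all $\alpha,\beta\in K$, $x,y\in X$. It is commutative if $xy=yx$ for all $x,y$. For invertible $b$, $b^0=\mathbf{1}$ and negative powers are powers of $b^{-1}$. A (finite) basis of a commutative scalable monoid $X$ over $K$ is a finite set $B=\{b_1,\ldots,b_n\}$ of invertible elements of $X$ such that every $x\in X$ has an expansion $x=\mu\prod_{i=1}^n b_i^{k_i}$ with $\mu\in K$ and $k_1,\ldots,k_n\in\mathbb{Z}$, and this expansion is unique (i.e. $\mu$ and $(k_1,\ldots,k_n)$ are uniquely determined by $x$). A quantity space over $K$ is a commutative scalable monoid over $K$ that has a finite basis. Elements $x,y$ are commensurable, $x\sim y$, if $\alpha x=\beta y$ for some $\alpha,\beta\in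 K$; this is an equivalence relation and a congruence, its classes are called realms (dimensions), $[x]$ is the realm of $x$, and $X/{\sim}$ is the set of realms with product $[x][y]=[xy]$ and unit $[\mathbf{1}]$; for a quantity space this is a commutative monoid in which every element has an inverse, i.e. an abelian group. A basis of the abelian group $X/{\sim}$ is a finite set $\{c_1,\ldots,c_n\}\subseteq X/{\sim}$ such that every element of $X/{\sim}$ can be written uniquely as $\prod_{i=1}^n c_i^{k_i}$ with $k_i\in\mathbb{Z}$. *)

(* Defs.v *)
From HB Require Import structures.
From mathcomp Require Import all_boot all_order all_algebra.
From Stdlib Require Import ClassicalEpsilon.
Set Implicit Arguments. Unset Strict Implicit. Unset Printing Implicit Defensive.
Import GRing.Theory.
Local Open Scope ring_scope.

Section MonoidNotions.
Variables (T : Type) (mul : T -> T -> T) (one : T).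

Definition m_invertible (x : T) : Prop := exists y, mul x y = one /\ mul y x = one.

(* the inverse of x (chosen; it is the unique inverse whenever x is invertible) *)
Definition m_inv (x : T) : T :=
  epsilon (inhabits one) (fun y => mul x y = one /\ mul y x = one).

Definition m_zpow (x : T) (k : int) : T :=
  match k with
  | Posz n => iter n (mul x) one
  | Negz n => iter n.+1 (mul (m_inv x)) one
  end.

Definition m_prodpow (n : nat) (b : 'I_n -> T) (k : 'I_n -> int) : T :=
  \big[mul/one]_(i < n) m_zpow (b i) (k i).

Definition group_basis (n : nat) (c : 'I_n -> T) : Prop :=
  (forall g : T, exists k : 'I_n -> int, g = m_prodpow c k) /\
  (forall k k' : 'I_n -> int, m_prodpow c k = m_prodpow c k' -> forall i, k i = k' i).
End MonoidNotions.

Record scalable_monoid (K : fieldType) := ScalableMonoid {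
  sm_car :> Type;
  sm_mul : sm_car -> sm_car -> sm_car;
  sm_one : sm_car;
  sm_scale : K -> sm_car -> sm_car;
  sm_mulA : forall x y z, sm_mul x (sm_mul y z) = sm_mul (sm_mul x y) z;
  sm_mul1x : forall x, sm_mul sm_one x = x;
  sm_mulx1 : forall x, sm_mul x sm_one = x;
  sm_scale1 : forall x, sm_scale 1 x = x;
  sm_scaleA : forall (a b : K) x, sm_scale a (sm_scale b x) = sm_scale (a * b) x;
  sm_scale_mull : forall (a : K) x y, sm_scale a (sm_mul x y) = sm_mul (sm_scale a x) y;
  sm_scale_mulr : forall (a : K) x y, sm_scale a (sm_mul x y) = sm_mul x (sm_scale a y)
}.

Section QuantitySpaces.
Variables (K : fieldType) (X : scalable_monoid K).

Definition sm_commutative : Prop := forall x y : X, sm_mul x y = sm_mul y x.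

Definition sm_invertible (x : X) : Prop := m_invertible (@sm_mul K X) (sm_one X) x.

Definition sm_basis (n : nat) (b : 'I_n -> X) : Prop :=
  (forall i, sm_invertible (b i)) /\
  (forall x : X, exists (mu : K) (k : 'I_n -> int),
      x = sm_scale mu (m_prodpow (@sm_mul K X) (sm_one X) b k)) /\
  (forall (mu mu' : K) (k k' : 'I_n -> int),
      sm_scale mu (m_prodpow (@sm_mul K X) (sm_one X) b k) =
      sm_scale mu' (m_prodpow (@sm_mul K X) (sm_one X) b k') ->
      mu = mu' /\ forall i, k i = k' i).

Definition quantity_space : Prop :=
  sm_commutative /\ exists (n : nat) (b : 'I_n -> X), sm_basis b.

Definition commensurable (x y : X) : Prop :=
  exists a b : K, sm_scale a x = sm_scale b y.

Definition realm_pred (x : X) : X -> Prop := fun y => commensurable x y.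

Definition realms : Type := {P : X -> Prop | exists x, P = realm_pred x}.

Definition realm (x : X) : realms := exist _ (realm_pred x) (ex_intro _ x erefl).

Definition realm_rep (r : realms) : X :=
  epsilon (inhabits (sm_one X)) (fun x => sval r = realm_pred x).

Definition realm_mul (r s : realms) : realms := realm (sm_mul (realm_rep r) (realm_rep s)).
Definition realm_one : realms := realm (sm_one X).

Definition realms_basis (n : nat) (c : 'I_n -> realms) : Prop :=
  group_basis realm_mul realm_one c.
End QuantitySpaces.

(* Main.v *)
Require Import Defs.
From mathcomp Require Import all_boot all_order all_algebra.
From Stdlib Require Import ClassicalEpsilon ProofIrrelevance FunctionalExtensionality PropExtensionality.

Set Implicit Arguments. Unset Strict Implicit. Unset Printing Implicit Defensive.
Import GRing.Theory.

Lemma m_inv_spec (T : Type) (mul : T -> T -> T) (one x : T) :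
  m_invertible mul one x ->
  mul x (m_inv mul one x) = one /\ mul (m_inv mul one x) x = one.
Proof.
move=> h; rewrite /m_inv.
exact: (epsilon_spec (inhabits one) (fun y => mul x y = one /\ mul y x = one)).
Qed.

Section S.
Variables (K : fieldType) (X : scalable_monoid K).
Local Notation mul := (@sm_mul K X).
Local Notation one := (sm_one X).
Local Notation sc := (@sm_scale K X).
Local Notation cm := (@commensurable K X).
Local Notation P b k := (m_prodpow (@sm_mul K X) (sm_one X) b k).
Local Open Scope ring_scope.

Lemma cm_refl x : cm x x.
Proof. by exists 1, 1. Qed.

Lemma cm_sym x y : cm x y -> cm y x.
Proof. by case=> a [b h]; exists b, a. Qed.

Lemma cm_trans x y z : cm x y -> cm y z -> cm x z.
Proof.
case=> a [b h1] [c [d h2]]; exists (c * a), (b * d).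
rewrite -(sm_scaleA c a x) h1 sm_scaleA mulrC -(sm_scaleA b c y) h2.
by rewrite sm_scaleA.
Qed.

Lemma cm_mul x x' y y' : cm x x' -> cm y y' -> cm (mul x y) (mul x' y').
Proof.
case=> a [b h1] [c [d h2]]; exists (a * c), (b * d).
rewrite -sm_scaleA sm_scale_mulr sm_scale_mull h1 h2.
by rewrite -sm_scale_mull -sm_scale_mulr sm_scaleA.
Qed.

Lemma realm_eq (r s : realms X) : sval r = sval s -> r = s.
Proof.
case: r => p hp; case: s => q hq /= e; subst q; f_equal; apply: proof_irrelevance.
Qed.

Lemma realm_eq_cm x y : cm x y -> realm x = realm y.
Proof.
move=> h; apply: realm_eq => /=.
apply: functional_extensionality => z; apply: propositional_extensionality.
rewrite /realm_pred; split; [exact: cm_trans (cm_sym h) | exact: cm_trans h].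
Qed.

Lemma cm_of_realm x y : realm x = realm y -> cm x y.
Proof.
move=> h; have : sval (realm y) y by exact: cm_refl.
by rewrite -h.
Qed.

Lemma rep_spec (r : realms X) : sval r = realm_pred (realm_rep r).
Proof.
rewrite /realm_rep.
apply: (epsilon_spec (inhabits one) (fun x => sval r = realm_pred x)).
by case: r => p [x hx]; exists x.
Qed.

Lemma realm_surj (r : realms X) : exists x, r = realm x.
Proof. by exists (realm_rep r); apply: realm_eq => /=; rewrite -rep_spec. Qed.

Lemma rep_cm x : cm x (realm_rep (realm x)).
Proof.
have h := rep_spec (realm x).
have : realm_pred (realm_rep (realm x)) (realm_rep (realm x)) by exact: cm_refl.
by rewrite -h.
Qed.

Lemma realm_mulE x y : realm_mul (realm x) (realm y) = realm (mul x y).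
Proof. by apply: realm_eq_cm; apply: cm_mul; apply: cm_sym; apply: rep_cm. Qed.

Lemma realm_mulA (r s t : realms X) :
  realm_mul r (realm_mul s t) = realm_mul (realm_mul r s) t.
Proof.
have [x ->] := realm_surj r; have [y ->] := realm_surj s; have [z ->] := realm_surj t.
by rewrite !realm_mulE sm_mulA.
Qed.

Lemma realm_mul1 (r : realms X) : realm_mul (realm_one X) r = r.
Proof. by have [x ->] := realm_surj r; rewrite realm_mulE sm_mul1x. Qed.

Lemma realm_mulr1 (r : realms X) : realm_mul r (realm_one X) = r.
Proof. by have [x ->] := realm_surj r; rewrite realm_mulE sm_mulx1. Qed.

Lemma realm_inv x : sm_invertible x ->
  m_inv (@realm_mul K X) (realm_one X) (realm x) = realm (m_inv mul one x).
Proof.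
move=> hx; have [h1 h2] := m_inv_spec hx.
set y := m_inv mul one x.
have hr : m_invertible (@realm_mul K X) (realm_one X) (realm x).
  by exists (realm y); rewrite !realm_mulE h1 h2.
have [g1 g2] := m_inv_spec hr.
set z := m_inv _ _ (realm x).
transitivity (realm_mul z (realm_mul (realm x) (realm y))).
  by rewrite realm_mulE h1 realm_mulr1.
by rewrite realm_mulA g2 realm_mul1.
Qed.

Lemma realm_iter y n :
  realm (iter n (mul y) one) = iter n (@realm_mul K X (realm y)) (realm_one X).
Proof. by elim: n => //= n IH; rewrite -IH realm_mulE. Qed.

Lemma realm_zpow y k : sm_invertible y ->
  realm (m_zpow mul one y k) = m_zpow (@realm_mul K X) (realm_one X) (realm y) k.
Proof.
move=> hy; case: k => n; rewrite /m_zpow; first exact: realm_iter.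
by rewrite realm_inv // -realm_iter.
Qed.

Lemma realm_prodpow n (b : 'I_n -> X) k : (forall i, sm_invertible (b i)) ->
  realm (P b k) = m_prodpow (@realm_mul K X) (realm_one X) (fun i => realm (b i)) k.
Proof.
move=> hb; rewrite /m_prodpow.
have hm : {morph (@realm K X) : x y / mul x y >-> realm_mul x y}.
  by move=> x y; rewrite realm_mulE.
rewrite (big_morph _ hm (erefl _)).
by apply: eq_bigr => i _; apply: realm_zpow.
Qed.

Lemma inv_mul x y : sm_invertible x -> sm_invertible y -> sm_invertible (mul x y).
Proof.
case=> x' [a1 a2] [y' [b1 b2]]; exists (mul y' x'); split.
  by rewrite sm_mulA -(sm_mulA x y y') b1 sm_mulx1 a1.
by rewrite sm_mulA -(sm_mulA y' x' x) a2 sm_mulx1 b2.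
Qed.

Lemma inv_one : sm_invertible one.
Proof. by exists one; rewrite sm_mulx1. Qed.

Lemma inv_minv x : sm_invertible x -> sm_invertible (m_inv mul one x).
Proof. by move=> hx; have [h1 h2] := m_inv_spec hx; exists x. Qed.

Lemma inv_iter y n : sm_invertible y -> sm_invertible (iter n (mul y) one).
Proof. by move=> hy; elim: n => [|n IH] /=; [exact: inv_one | exact: inv_mul]. Qed.

Lemma inv_prodpow n (b : 'I_n -> X) k : (forall i, sm_invertible (b i)) ->
  sm_invertible (P b k).
Proof.
move=> hb; rewrite /m_prodpow; apply: big_ind; first exact: inv_one.
  exact: inv_mul.
move=> i _; case: (k i) => m; rewrite /m_zpow; first exact: inv_iter.
exact: (inv_iter _ (inv_minv (hb i))).
Qed.

Lemma big_pick n (r : seq 'I_n) x i : uniq r ->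
  \big[mul/one]_(j <- r) (if j == i then x else one) = if i \in r then x else one.
Proof.
elim: r => [|a r IH] /=; first by rewrite big_nil.
case/andP => har ur; rewrite big_cons IH // inE.
have [<-|ne] := eqVneq a i; first by rewrite (negbTE har) /= sm_mulx1.
by rewrite /= sm_mul1x.
Qed.

Lemma P_delta n (b : 'I_n -> X) i : P b (fun j => Posz (nat_of_bool (j == i))) = b i.
Proof.
rewrite /m_prodpow (eq_bigr (fun j => if j == i then b i else one)); last first.
  by move=> j _; have [->|_] := eqVneq j i; rewrite /= ?sm_mulx1.
by rewrite big_pick ?index_enum_uniq // mem_index_enum.
Qed.

Section Basis.
Variables (n0 : nat) (b0 : 'I_n0 -> X).
Hypothesis hb0 : sm_basis b0.

Lemma L0 y : one <> sc 0 y.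
Proof.
have [_ [hsp huniq]] := hb0; move=> h.
have [s [r hone]] := hsp one.
have [t [tt ht]] := hsp (mul y (P b0 r)).
have : sc 1 (P b0 r) = sc (0 * t) (P b0 tt).
  by rewrite sm_scale1 -sm_scaleA -ht sm_scale_mull -h sm_mul1x.
move/huniq => [+ _]; rewrite mul0r => /eqP; by rewrite oner_eq0.
Qed.

Lemma Rinv x y : cm x y -> sm_invertible y -> exists mu, x = sc mu y.
Proof.
have [_ [hsp huniq]] := hb0.
case=> a [c h] [y' [e1 e2]].
have [mu [m hx]] := hsp x; have [nu [m' hy]] := hsp y.
move: h; rewrite hx hy !sm_scaleA => /huniq [_ hm].
have em : m = m' := functional_extensionality _ _ hm.
subst m'.
have nu0 : nu != 0.
  apply/eqP => nu0; apply: (@L0 (mul (P b0 m) y')).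
  by rewrite -{1}e1 hy nu0 sm_scale_mull.
exists (mu / nu); by rewrite sm_scaleA divfK.
Qed.

Lemma scale_inj mu mu' Q : sm_invertible Q -> sc mu Q = sc mu' Q -> mu = mu'.
Proof.
have [_ [hsp huniq]] := hb0.
case=> Q' [e1 e2] h.
have h1 : sc mu one = sc mu' one.
  by rewrite -e1 !sm_scale_mull h.
have [s [r hone]] := hsp one.
have s0 : s != 0.
  by apply/eqP => s0; apply: (@L0 (P b0 r)); rewrite {1}hone s0.
move: h1; rewrite hone !sm_scaleA => /huniq [+ _].
exact: mulIf.
Qed.
End Basis.
End S.

Theorem mainTheorem14 (K : fieldType) (X : scalable_monoid K) :
  quantity_space X ->
  (forall (n : nat) (b : 'I_n -> X),
      sm_basis b ->
      realms_basis (fun i => realm (b i)) /\ injective (fun i => realm (b i))) /\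
  (forall (n : nat) (b : 'I_n -> X),
      (forall i, sm_invertible (b i)) ->
      realms_basis (fun i => realm (b i)) ->
      (forall i j : 'I_n, i != j -> realm (b i) <> realm (b j)) ->
      sm_basis b /\ injective b).
Proof.
move=> [hcomm [n0 [b0 hb0]]]; split.
- move=> n b hb; have hinv := hb.1; have [_ [hsp hun]] := hb.
  split; first split.
  + move=> g; have [x ->] := realm_surj g; have [mu [k ->]] := hsp x.
    exists k; rewrite -realm_prodpow //; apply: realm_eq_cm.
    by exists 1%R, mu; rewrite sm_scale1.
  + move=> k k' h; rewrite -!realm_prodpow // in h.
    have [a [c hac]] := cm_of_realm h.
    exact: (hun _ _ _ _ hac).2.
  + move=> i j /= h; have [a [c hac]] := cm_of_realm h.
    rewrite -(P_delta b i) -(P_delta b j) in hac.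
    have := (hun _ _ _ _ hac).2 i; rewrite eqxx.
    by have [//|ne] := eqVneq i j.
- move=> n b hinv [hsp hun] hdist.
  have injb : injective b.
    move=> i j e; apply/eqP; apply: contraT => ne.
    by case: (hdist i j ne); rewrite e.
  split=> //; split=> //; split.
  + move=> x; have [k hk] := hsp (realm x).
    rewrite -realm_prodpow // in hk.
    have [mu ->] := Rinv hb0 (cm_of_realm hk) (inv_prodpow k hinv).
    by exists mu, k.
  + move=> mu mu' k k' h.
    have hkk := hun k k' (etrans (esym (realm_prodpow k hinv))
                   (etrans (realm_eq_cm (ex_intro _ mu (ex_intro _ mu' h)))
                           (realm_prodpow k' hinv))).
    have ek : k = k' := functional_extensionality _ _ hkk.
    subst k'; split => //.
    by have := scale_inj hb0 (inv_prodpow k hinv); move=> /(_ _ _ h).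
Qed.
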